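(* Let $a\neq0$ be a constant and let $\phi(x,t)$ be a smooth function with $\phi_x\neq0$ satisfying $$(1-\partial_x^2)\frac{\phi_t}{\phi_x}+a\{\phi;x\}=0.$$ Then $u=-\phi_t/\phi_x$ satisfies the Camassa–Holm equation $$u_t-u_{xxt}+a u_{xxx}+3uu_x-2u_xu_{xx}-uu_{xxx}=0.$$
   Context: The Schwarzian derivative of a function $\phi(x,t)$ with $\phi_x\neq0$ is $\{\phi;x\}=\frac{\phi_{xxx}}{\phi_x}-\frac32\frac{\phi_{xx}^2}{\phi_x^2}$. All functions are smooth. *)

(* Defs.v *)
From Stdlib Require Import Reals List.
From Coquelicot Require Import Coquelicot.
Open Scope R_scope.

Definition px (f : R -> R -> R) : R -> R -> R :=
  fun x t => Derive (fun y => f y t) x.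
Definition pt (f : R -> R -> R) : R -> R -> R :=
  fun x t => Derive (fun s => f x s) t.

(* Iterated partial derivative along a word: true = d/dx, false = d/dt,
   the head of the list is applied last. *)
Fixpoint iterD (w : list bool) (f : R -> R -> R) : R -> R -> R :=
  match w with
  | nil => f
  | b :: w' => if b then px (iterD w' f) else pt (iterD w' f)
  end.

Definition smooth2 (f : R -> R -> R) : Prop :=
  forall w : list bool,
    (forall x t, continuous (fun p : R * R => iterD w f (fst p) (snd p)) (x, t)) /\
    (forall x t, ex_derive (fun y => iterD w f y t) x /\
                 ex_derive (fun s => iterD w f x s) t).

Definition schwarzian_x (phi : R -> R -> R) : R -> R -> R :=
  fun x t =>
    px (px (px phi)) x t / px phi x t
    - 3 / 2 * (px (px phi) x t) ^ 2 / (px phi x t) ^ 2.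

(* Main.v *)
Require Import Defs.
From Stdlib Require Import Reals List FunctionalExtensionality.
From Coquelicot Require Import Coquelicot.
Open Scope R_scope.

Definition dq0 b a db da := (db*a - b*da)/a^2.
Definition q2 b b1 b2 a a1 a2 := (b2*a - b*a2)/a^2 - 2*((b1*a - b*a1)*a1)/a^3.
Definition dq2 b b1 b2 a a1 a2 db db1 db2 da da1 da2 :=
  (db2*a + b2*da - db*a2 - b*da2)/a^2 - 2*(b2*a - b*a2)*da/a^3
  - 2*(((db1*a + b1*da - db*a1 - b*da1)*a1 + (b1*a - b*a1)*da1)/a^3
       - 3*((b1*a - b*a1)*a1)*da/a^4).
Definition Sw a a1 a2 := a2 / a - 3 / 2 * a1 ^ 2 / a ^ 2.
Definition dS a a1 a2 da da1 da2 :=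
  da2/a - a2*da/a^2 - 3/2*(2*a1*da1/a^2 - 2*a1^2*da/a^3).
Definition HE k b b1 b2 a a1 a2 := b / a - q2 b b1 b2 a a1 a2 + k * Sw a a1 a2.
Definition dHE k b b1 b2 a a1 a2 db db1 db2 da da1 da2 :=
  dq0 b a db da - dq2 b b1 b2 a a1 a2 db db1 db2 da da1 da2 + k * dS a a1 a2 da da1 da2.

Ltac finish_D := repeat match goal with
  | H : is_derive ?f ?x ?d |- _ =>
     replace (Derive (fun y => f y) x) with d in * by (symmetry; now apply is_derive_unique);
     clear H end.

Ltac side := repeat split; try (eexists; eassumption); repeat apply Rmult_integral_contrapositive_currified; auto with real.

Lemma G0 (b a : R->R) db da x : is_derive b x db -> is_derive a x da -> a x <> 0 ->
  is_derive (fun y => b y / a y) x (dq0 (b x) (a x) db da).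
Proof.
  intros Hb Ha Hn. auto_derive.
  - side.
  - finish_D. unfold dq0. field. auto.
Qed.

Lemma G1 (b b1 a a1 : R->R) db1 da1 x :
  is_derive b x (b1 x) -> is_derive a x (a1 x) -> is_derive b1 x db1 -> is_derive a1 x da1 ->
  a x <> 0 ->
  is_derive (fun y => dq0 (b y) (a y) (b1 y) (a1 y)) x (q2 (b x) (b1 x) db1 (a x) (a1 x) da1).
Proof.
  intros Hb Ha Hb1 Ha1 Hn. unfold dq0. auto_derive.
  - side.
  - finish_D. unfold q2. field. auto.
Qed.

Lemma G2 (b b1 b2 a a1 a2 : R->R) db db1 db2 da da1 da2 x :
  is_derive b x db -> is_derive b1 x db1 -> is_derive b2 x db2 ->
  is_derive a x da -> is_derive a1 x da1 -> is_derive a2 x da2 ->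
  a x <> 0 ->
  is_derive (fun y => q2 (b y) (b1 y) (b2 y) (a y) (a1 y) (a2 y)) x
    (dq2 (b x) (b1 x) (b2 x) (a x) (a1 x) (a2 x) db db1 db2 da da1 da2).
Proof.
  intros Hb Hb1 Hb2 Ha Ha1 Ha2 Hn. unfold q2. auto_derive.
  - side.
  - finish_D. unfold dq2. field. auto.
Qed.

Lemma GH k (b b1 b2 a a1 a2 : R->R) db db1 db2 da da1 da2 x :
  is_derive b x db -> is_derive b1 x db1 -> is_derive b2 x db2 ->
  is_derive a x da -> is_derive a1 x da1 -> is_derive a2 x da2 ->
  a x <> 0 ->
  is_derive (fun y => HE k (b y) (b1 y) (b2 y) (a y) (a1 y) (a2 y)) x
    (dHE k (b x) (b1 x) (b2 x) (a x) (a1 x) (a2 x) db db1 db2 da da1 da2).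
Proof.
  intros Hb Hb1 Hb2 Ha Ha1 Ha2 Hn. unfold HE, q2, Sw. auto_derive.
  - side.
  - finish_D. unfold dHE, dq0, dq2, dS. field. auto.
Qed.
Lemma loc_all (P : R -> R -> Prop) x y : (forall u v, P u v) -> locally_2d P x y.
Proof. intros H. exists (mkposreal 1 Rlt_0_1). intros; apply H. Qed.

Lemma comm_w phi (Hs : smooth2 phi) (w : list bool) :
  pt (px (iterD w phi)) = px (pt (iterD w phi)).
Proof.
  apply functional_extensionality; intro x; apply functional_extensionality; intro t.
  unfold pt, px. symmetry.
  apply (Schwarz (iterD w phi)).
  - apply loc_all. intros u v.
    destruct (proj2 (Hs w) u v) as [h1 h2].
    destruct (proj2 (Hs (false :: w)) u v) as [h3 _].
    destruct (proj2 (Hs (true :: w)) u v) as [_ h4].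
    simpl in h3, h4. unfold pt, px in h3, h4. tauto.
  - apply continuity_2d_pt_filterlim.
    exact (proj1 (Hs (true :: false :: w)) x t).
  - apply continuity_2d_pt_filterlim.
    exact (proj1 (Hs (false :: true :: w)) x t).
Qed.

Lemma alg k b b1 b2 b3 a a1 a2 a3 c c1 c2 : a <> 0 ->
  HE k b b1 b2 a a1 a2 = 0 ->
  dHE k b b1 b2 a a1 a2 b1 b2 b3 a1 a2 a3 = 0 ->
  dHE k b b1 b2 a a1 a2 c c1 c2 b1 b2 b3 = 0 ->
  - dq0 b a c b1 - - dq2 b b1 b2 a a1 a2 c c1 c2 b1 b2 b3
  + k * - dq2 b b1 b2 a a1 a2 b1 b2 b3 a1 a2 a3
  + 3 * - (b / a) * - dq0 b a b1 a1
  - 2 * - dq0 b a b1 a1 * - q2 b b1 b2 a a1 a2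
  - - (b / a) * - dq2 b b1 b2 a a1 a2 b1 b2 b3 a1 a2 a3 = 0.
Proof.
  intros Hn H0 HX HT.
  transitivity (- dHE k b b1 b2 a a1 a2 c c1 c2 b1 b2 b3
     + (b/a) * dHE k b b1 b2 a a1 a2 b1 b2 b3 a1 a2 a3
     + 2 * dq0 b a b1 a1 * HE k b b1 b2 a a1 a2).
  - unfold dHE, HE, dq0, q2, dq2, Sw, dS. field. auto.
  - rewrite H0, HX, HT. ring.
Qed.

Lemma opp_px (F : R -> R -> R) : px (fun x t => - F x t) = fun x t => - px F x t.
Proof. apply functional_extensionality; intro x; apply functional_extensionality; intro t.
  unfold px. apply Derive_opp. Qed.
Lemma opp_pt (F : R -> R -> R) : pt (fun x t => - F x t) = fun x t => - pt F x t.
Proof. apply functional_extensionality; intro x; apply functional_extensionality; intro t.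
  unfold pt. apply Derive_opp. Qed.

Theorem mainTheorem3 (a : R) (phi : R -> R -> R) :
  a <> 0 ->
  smooth2 phi ->
  (forall x t, px phi x t <> 0) ->
  (let w := fun x t => pt phi x t / px phi x t in
   forall x t, w x t - px (px w) x t + a * schwarzian_x phi x t = 0) ->
  let u := fun x t => - (pt phi x t / px phi x t) in
  forall x t,
    pt u x t - pt (px (px u)) x t + a * px (px (px u)) x t
    + 3 * u x t * px u x t - 2 * px u x t * px (px u) x t
    - u x t * px (px (px u)) x t = 0.
Proof.
  intros Ha Hs Hn Hyp u x0 t0.
  assert (EX : forall w x t, is_derive (fun y => iterD w phi y t) x (px (iterD w phi) x t)).
  { intros w x t. apply Derive_correct. apply (proj2 (Hs w) x t). }
  assert (ET : forall w x t, is_derive (fun s => iterD w phi x s) t (pt (iterD w phi) x t)).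
  { intros w x t. apply Derive_correct. apply (proj2 (Hs w) x t). }
  set (w := fun x t => pt phi x t / px phi x t).
  assert (W1 : px w = fun x t => dq0 (pt phi x t) (px phi x t) (px (pt phi) x t) (px (px phi) x t)).
  { apply functional_extensionality; intro x; apply functional_extensionality; intro t.
    apply is_derive_unique. apply (G0 (fun y => pt phi y t) (fun y => px phi y t)).
    - exact (EX (false :: nil) x t).
    - exact (EX (true :: nil) x t).
    - apply Hn. }
  assert (W2 : px (fun x t => dq0 (pt phi x t) (px phi x t) (px (pt phi) x t) (px (px phi) x t))
      = fun x t => q2 (pt phi x t) (px (pt phi) x t) (px (px (pt phi)) x t)
                      (px phi x t) (px (px phi) x t) (px (px (px phi)) x t)).
  { apply functional_extensionality; intro x; apply functional_extensionality; intro t.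
    apply is_derive_unique.
    apply (G1 (fun y => pt phi y t) (fun y => px (pt phi) y t) (fun y => px phi y t) (fun y => px (px phi) y t)).
    - exact (EX (false :: nil) x t).
    - exact (EX (true :: nil) x t).
    - exact (EX (true :: false :: nil) x t).
    - exact (EX (true :: true :: nil) x t).
    - apply Hn. }

  assert (W3 : px (fun x t => q2 (pt phi x t) (px (pt phi) x t) (px (px (pt phi)) x t)
                      (px phi x t) (px (px phi) x t) (px (px (px phi)) x t))
     = fun x t => dq2 (pt phi x t) (px (pt phi) x t) (px (px (pt phi)) x t)
                      (px phi x t) (px (px phi) x t) (px (px (px phi)) x t)
                      (px (pt phi) x t) (px (px (pt phi)) x t) (px (px (px (pt phi))) x t)
                      (px (px phi) x t) (px (px (px phi)) x t) (px (px (px (px phi))) x t)).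
  { apply functional_extensionality; intro x; apply functional_extensionality; intro t.
    apply is_derive_unique.
    apply (G2 (fun y => pt phi y t) (fun y => px (pt phi) y t) (fun y => px (px (pt phi)) y t)
              (fun y => px phi y t) (fun y => px (px phi) y t) (fun y => px (px (px phi)) y t)).
    - exact (EX (false :: nil) x t).
    - exact (EX (true :: false :: nil) x t).
    - exact (EX (true :: true :: false :: nil) x t).
    - exact (EX (true :: nil) x t).
    - exact (EX (true :: true :: nil) x t).
    - exact (EX (true :: true :: true :: nil) x t).
    - apply Hn. }
  assert (WT : pt w = fun x t => dq0 (pt phi x t) (px phi x t) (pt (pt phi) x t) (pt (px phi) x t)).
  { apply functional_extensionality; intro x; apply functional_extensionality; intro t.
    apply is_derive_unique. apply (G0 (fun y => pt phi x y) (fun y => px phi x y)).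
    - exact (ET (false :: nil) x t).
    - exact (ET (true :: nil) x t).
    - apply Hn. }
  assert (W2T : pt (fun x t => q2 (pt phi x t) (px (pt phi) x t) (px (px (pt phi)) x t)
                      (px phi x t) (px (px phi) x t) (px (px (px phi)) x t))
     = fun x t => dq2 (pt phi x t) (px (pt phi) x t) (px (px (pt phi)) x t)
                      (px phi x t) (px (px phi) x t) (px (px (px phi)) x t)
                      (pt (pt phi) x t) (pt (px (pt phi)) x t) (pt (px (px (pt phi))) x t)
                      (pt (px phi) x t) (pt (px (px phi)) x t) (pt (px (px (px phi))) x t)).
  { apply functional_extensionality; intro x; apply functional_extensionality; intro t.
    apply is_derive_unique.
    apply (G2 (fun y => pt phi x y) (fun y => px (pt phi) x y) (fun y => px (px (pt phi)) x y)
              (fun y => px phi x y) (fun y => px (px phi) x y) (fun y => px (px (px phi)) x y)).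
    - exact (ET (false :: nil) x t).
    - exact (ET (true :: false :: nil) x t).
    - exact (ET (true :: true :: false :: nil) x t).
    - exact (ET (true :: nil) x t).
    - exact (ET (true :: true :: nil) x t).
    - exact (ET (true :: true :: true :: nil) x t).
    - apply Hn. }
  assert (HH0 : forall x t, HE a (pt phi x t) (px (pt phi) x t) (px (px (pt phi)) x t)
                      (px phi x t) (px (px phi) x t) (px (px (px phi)) x t) = 0).
  { intros x t. pose proof (Hyp x t) as h. cbv zeta in h.
    change (fun x t => pt phi x t / px phi x t) with w in h.
    rewrite W1, W2 in h. unfold schwarzian_x in h. unfold HE, Sw. exact h. }
  assert (HX : dHE a (pt phi x0 t0) (px (pt phi) x0 t0) (px (px (pt phi)) x0 t0)
                      (px phi x0 t0) (px (px phi) x0 t0) (px (px (px phi)) x0 t0)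
                      (px (pt phi) x0 t0) (px (px (pt phi)) x0 t0) (px (px (px (pt phi))) x0 t0)
                      (px (px phi) x0 t0) (px (px (px phi)) x0 t0) (px (px (px (px phi))) x0 t0) = 0).
  { pose proof (GH a (fun y => pt phi y t0) (fun y => px (pt phi) y t0) (fun y => px (px (pt phi)) y t0)
              (fun y => px phi y t0) (fun y => px (px phi) y t0) (fun y => px (px (px phi)) y t0)
              _ _ _ _ _ _ x0
              (EX (false :: nil) x0 t0) (EX (true :: false :: nil) x0 t0)
              (EX (true :: true :: false :: nil) x0 t0) (EX (true :: nil) x0 t0)
              (EX (true :: true :: nil) x0 t0) (EX (true :: true :: true :: nil) x0 t0)
              (Hn x0 t0)) as D.
    apply (is_derive_ext _ (fun _ => 0)) in D; [| intro; apply HH0].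
    apply is_derive_unique in D. rewrite Derive_const in D. symmetry; exact D. }
  assert (HT : dHE a (pt phi x0 t0) (px (pt phi) x0 t0) (px (px (pt phi)) x0 t0)
                      (px phi x0 t0) (px (px phi) x0 t0) (px (px (px phi)) x0 t0)
                      (pt (pt phi) x0 t0) (pt (px (pt phi)) x0 t0) (pt (px (px (pt phi))) x0 t0)
                      (pt (px phi) x0 t0) (pt (px (px phi)) x0 t0) (pt (px (px (px phi))) x0 t0) = 0).
  { pose proof (GH a (fun y => pt phi x0 y) (fun y => px (pt phi) x0 y) (fun y => px (px (pt phi)) x0 y)
              (fun y => px phi x0 y) (fun y => px (px phi) x0 y) (fun y => px (px (px phi)) x0 y)
              _ _ _ _ _ _ t0
              (ET (false :: nil) x0 t0) (ET (true :: false :: nil) x0 t0)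
              (ET (true :: true :: false :: nil) x0 t0) (ET (true :: nil) x0 t0)
              (ET (true :: true :: nil) x0 t0) (ET (true :: true :: true :: nil) x0 t0)
              (Hn x0 t0)) as D.
    apply (is_derive_ext _ (fun _ => 0)) in D; [| intro; apply HH0].
    apply is_derive_unique in D. rewrite Derive_const in D. symmetry; exact D. }
  specialize (HH0 x0 t0).
  change u with (fun x t => - w x t).
  rewrite !opp_px, !opp_pt.
  rewrite W1, WT, W2, W3, W2T.
  cbv beta. unfold w.
  pose proof (comm_w phi Hs nil) as c1; cbn [iterD] in c1.
  pose proof (comm_w phi Hs (true :: nil)) as c2; cbn [iterD] in c2; rewrite c1 in c2.
  pose proof (comm_w phi Hs (true :: true :: nil)) as c3; cbn [iterD] in c3; rewrite c2 in c3.
  pose proof (comm_w phi Hs (false :: nil)) as c4; cbn [iterD] in c4.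
  pose proof (comm_w phi Hs (true :: false :: nil)) as c5; cbn [iterD] in c5; rewrite c4 in c5.
  rewrite c1, c2, c3, c5, c4 in *.
  apply alg; auto.
Qed.
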